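(* Let $P,Q$ be mutually absolutely continuous probability measures, let $E$ be measurable, $q:=Q(E)$, and $r:=\chi^2(Q\Vert P)$. Then $$P(E)\le\frac{r+2q+\sqrt{r^2+4r\,q(1-q)}}{2(1+r)}.$$
   Context: $\chi^2(Q\Vert P):=\int\big(\tfrac{\mathrm dQ}{\mathrm dP}\big)^2\mathrm dP-1$; equivalently it is the $f$-divergence $D_f(P\Vert Q)=\int f(\mathrm dP/\mathrm dQ)\,\mathrm dQ$ with $f(t)=1/t-1$. *)

(* Defs.v *)
From HB Require Import structures.
From mathcomp Require Import all_boot all_order all_algebra.
From mathcomp Require Import all_classical all_reals all_analysis.
Set Implicit Arguments. Unset Strict Implicit. Unset Printing Implicit Defensive.
Import Order.TTheory GRing.Theory Num.Theory.
Local Open Scope classical_set_scope.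
Local Open Scope ring_scope.
Local Open Scope ereal_scope.

Definition chi2 d (T : measurableType d) (R : realType)
  (Q P : probability T R) : \bar R :=
  \int[P]_x (Radon_Nikodym (charge_of_finite_measure Q) P x
             * Radon_Nikodym (charge_of_finite_measure Q) P x) - 1.

(* Main.v *)
Require Import Defs.
From HB Require Import structures.
From mathcomp Require Import all_boot all_order all_algebra.
From mathcomp Require Import all_classical all_reals all_analysis.
From mathcomp Require Import ring lra measurable_realfun.
Import Order.TTheory GRing.Theory Num.Theory.
Local Open Scope classical_set_scope.
Local Open Scope ring_scope.

Section aux.
Context d (T : measurableType d) (R : realType) (mu : {measure set T -> \bar R}).

Lemma intD (f1 f2 : T -> R) : mu.-integrable setT (EFin \o f1) ->
  mu.-integrable setT (EFin \o f2) ->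
  mu.-integrable setT (EFin \o (fun x => f1 x + f2 x)).
Proof.
move=> h1 h2; apply: eq_integrable (integrableD _ h1 h2) => //.
Qed.

Lemma intZ (f1 : T -> R) k : mu.-integrable setT (EFin \o f1) ->
  mu.-integrable setT (EFin \o (fun x => k * f1 x)).
Proof.
move=> h1; apply: eq_integrable (integrableZl _ k h1) => //.
Qed.
End aux.

Lemma key (R : realType) (p q r : R) :
  0 <= p <= 1 -> 0 <= q <= 1 ->
  (forall t u : R, 0 <= t ^+ 2 * r + 2 * t * u * (p - q) + u ^+ 2 * (p * (1 - p))) ->
  p <= (r + 2 * q + Num.sqrt (r ^+ 2 + 4 * r * q * (1 - q))) / (2 * (1 + r)).
Proof.
move=> /andP[p0 p1] /andP[q0 q1] H.
have r0 : 0 <= r by have := H 1 0; rewrite expr1n mul1r !mulr0 mul0r !addr0 expr0n /= mul0r addr0.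
have HD : (p - q) ^+ 2 <= r * (p * (1 - p)).
  have [rz|rp] := eqVneq r 0.
    rewrite rz mul0r; have [Dz|Dn] := eqVneq (p - q) 0.
      by rewrite Dz expr0n.
    have := H (- (p * (1 - p) + 1) / (2 * (p - q))) 1.
    rewrite rz mulr0 add0r expr1n mul1r mulr1.
    have -> : 2 * (- (p * (1 - p) + 1) / (2 * (p - q))) * (p - q) = - (p * (1 - p) + 1).
      by field; rewrite Dn /=; lra.
    lra.
  have := H (- (p - q)) r.
  have r0' : 0 < r by rewrite lt_def rp r0.
  move=> h.
  have : 0 <= r * (r * (p * (1 - p)) - (p - q) ^+ 2) by nra.
  rewrite pmulr_rge0 //; lra.
have r1 : 0 < 2 * (1 + r) by lra.
rewrite ler_pdivlMr //.
rewrite -subr_ge0.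
set S := Num.sqrt _.
have S0 : 0 <= S by exact: sqrtr_ge0.
set X := p * (2 * (1 + r)) - (r + 2 * q).
suff : X <= S by rewrite /X; lra.
have [Xn|Xp] := leP X 0; first lra.
have arg0 : 0 <= r ^+ 2 + 4 * r * q * (1 - q).
  have : 0 <= r * q * (1 - q) by apply: mulr_ge0; [apply: mulr_ge0|]; lra.
  have : 0 <= r ^+ 2 by exact: sqr_ge0.
  lra.
have : X ^+ 2 <= r ^+ 2 + 4 * r * q * (1 - q).
  have -> : X ^+ 2 = r ^+ 2 + 4 * r * q * (1 - q) + 4 * (1 + r) * ((p - q) ^+ 2 - r * (p * (1 - p))).
    by rewrite /X; ring.
  have : 0 <= 4 * (1 + r) * (r * (p * (1 - p)) - (p - q) ^+ 2) by apply: mulr_ge0; lra.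
  lra.
rewrite -(ler_sqrt _ arg0) sqrtr_sqr ger0_norm //; lra.
Qed.

Theorem mainTheorem18 (d : measure_display) (T : measurableType d) (R : realType)
  (P Q : probability T R) (E : set T) (mE : measurable E)
  (PQ : P `<< Q) (QP : Q `<< P) (rfin : chi2 Q P \is a fin_num) :
  let q := fine (Q E) in
  let r := fine (chi2 Q P) in
  fine (P E) <= (r + 2 * q + Num.sqrt (r ^+ 2 + 4 * r * q * (1 - q))) / (2 * (1 + r)).
Proof.
cbv zeta; set q := fine (Q E); set r := fine (chi2 Q P).
set f := Radon_Nikodym (charge_of_finite_measure Q) P.
have QP' : charge_of_finite_measure Q `<< P := QP.
have ffin x : f x \is a fin_num := Radon_Nikodym_fin_num x QP'.
have fint : P.-integrable setT f := Radon_Nikodym_integrable QP'.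
have QA A : measurable A -> Q A = (\int[P]_(x in A) f x)%E :=
  fun mA => Radon_Nikodym_integral QP' mA.
pose g x := fine (f x).
have fg : f = EFin \o g by apply/funext => x; rewrite /g /= fineK.
have gint : P.-integrable setT (EFin \o g) by rewrite -fg.
have mg : measurable_fun setT g.
  by apply/measurable_realfun.measurable_EFinP; rewrite -fg; exact: measurable_int fint.
pose ind x : R := \1_E x.
have mind : measurable_fun setT ind by exact: measurable_realfun.measurable_indic.
have indint : P.-integrable setT (EFin \o ind) by exact: integrable_indic.
have cint c : P.-integrable setT (EFin \o (fun _ : T => c)).
  exact: finite_measure_integrable_cst.
have gEint : P.-integrable setT (EFin \o (fun x => g x * ind x)).
  apply: le_integrable gint => //.
    by apply/measurable_realfun.measurable_EFinP; exact: measurable_funM.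
  move=> x _ /=; rewrite /ind indicE.
  by case: (x \in E); rewrite ?mulr1 ?mulr0 ?normr0 ?lee_fin ?normr_ge0.
pose J := (\int[P]_x (g x * g x)%:E)%E.
have chiE : chi2 Q P = (J - 1)%E.
  rewrite /chi2 /J; congr (_ - _)%E; apply: eq_integral => x _.
  by rewrite -/f fg.
have Jfin : J \is a fin_num.
  by move: rfin; rewrite chiE fin_numB => /andP[].
have ggint : P.-integrable setT (EFin \o (fun x => g x * g x)).
  apply/integrableP; split.
    by apply/measurable_realfun.measurable_EFinP; exact: measurable_funM.
  rewrite (eq_integral (fun x => (g x * g x)%:E)); last first.
    by move=> x _; rewrite /= ger0_norm // -expr2 sqr_ge0.
  by rewrite -ge0_fin_numE //; apply: integral_ge0 => x _; rewrite lee_fin -expr2 sqr_ge0.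
have Igg : Rintegral P setT (fun x => g x * g x) = 1 + r.
  have -> : Rintegral P setT (fun x => g x * g x) = fine J by [].
  rewrite /r chiE (fineB Jfin) //; rewrite [fine 1%E]/=; lra.
have Ig : Rintegral P setT g = 1.
  rewrite /Rintegral.
  have -> : (\int[P]_x (g x)%:E)%E = Q setT.
    by rewrite QA // fg.
  by rewrite probability_setT.
have IgE : Rintegral P setT (fun x => g x * ind x) = q.
  rewrite /q QA // /Rintegral [in RHS]integral_mkcond; congr fine.
  apply: eq_integral => x _; rewrite fg /patch /ind indicE /=.
  by case: (x \in E); rewrite ?mulr1 ?mulr0.
have Iind : Rintegral P setT ind = fine (P E).
  by rewrite /Rintegral integral_indic // setIT.
have Icst c : Rintegral P setT (fun _ => c) = c.
  rewrite Rintegral_cst //.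
  by rewrite -[fine _]/(fine (P setT)) probability_setT mulr1.
set p := fine (P E).
have p01 : 0 <= p <= 1.
  rewrite /p fine_ge0 ?measure_ge0 //=.
  rewrite -lee_fin fineK ?fin_num_measure //.
  by rewrite -(probability_setT P) le_measure ?inE.
have q01 : 0 <= q <= 1.
  rewrite /q fine_ge0 ?measure_ge0 //=.
  rewrite -lee_fin fineK ?fin_num_measure //.
  by rewrite -(probability_setT Q) le_measure ?inE.
Ltac solve_int gint ggint gEint indint cint :=
  repeat (first [exact: gint | exact: ggint | exact: gEint | exact: indint
                | exact: cint | apply: intD | apply: intZ]).
have Iall : forall a b c e k : R, Rintegral P setT
    (fun x => a * (g x * g x) + b * g x + c + e * (g x * ind x) + k * ind x)
    = a * (1 + r) + b + c + e * q + k * p.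
  move=> a b c e k.
  rewrite !RintegralD //; try solve_int gint ggint gEint indint cint.
  rewrite !RintegralZl //; try solve_int gint ggint gEint indint cint.
  by rewrite Igg Ig Icst IgE Iind mulr1.
apply: key => // t u.
pose a := t ^+ 2; pose b := - (2 * t ^+ 2) + 2 * t * u * p.
pose c := t ^+ 2 - 2 * t * u * p + u ^+ 2 * p ^+ 2; pose e := - (2 * t * u).
pose k := 2 * t * u - 2 * u ^+ 2 * p + u ^+ 2.
have Hpt x : a * (g x * g x) + b * g x + c + e * (g x * ind x) + k * ind x
    = (t * (g x - 1) + u * (p - ind x)) ^+ 2.
  by rewrite /ind indicE; case: (x \in E); rewrite /a /b /c /e /k /=; ring.
have : 0 <= Rintegral P setT
    (fun x => a * (g x * g x) + b * g x + c + e * (g x * ind x) + k * ind x).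
  by apply: Rintegral_ge0 => x _; rewrite Hpt; exact: sqr_ge0.
rewrite Iall.
have -> : a * (1 + r) + b + c + e * q + k * p
  = t ^+ 2 * r + 2 * t * u * (p - q) + u ^+ 2 * (p * (1 - p)).
  by rewrite /a /b /c /e /k; ring.
by [].
Qed.
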